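(* Let $m\geq 7$ be an integer. Then for every prime $p$ of the form $p=4m^2n+1$ with $n$ a positive integer, we have $d_m(\mathbb{Z}/p\mathbb{Z})\geq \frac18\left(1-\frac1p\right)$. In particular, $d_m\geq\frac18$.
   Context: For a positive integer $m$, a subset $A$ of an abelian group is $m$-sum-free if there is no triple $(x,y,z)\in A^3$ with $x+y=mz$. For a prime $p$, $d_m(\mathbb{Z}/p\mathbb{Z})=\max\{|A|/p : A\subseteq \mathbb{Z}/p\mathbb{Z}\ \text{is } m\text{-sum-free}\}$. For $m\ge 3$ it is known (from prior work) that $d_m(\mathbb{Z}/p\mathbb{Z})$ converges as $p\to\infty$ through primes; $d_m$ denotes this limit. *)

(* Defs.v *)
From HB Require Import structures.
From mathcomp Require Import all_boot all_order all_algebra.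
Set Implicit Arguments. Unset Strict Implicit. Unset Printing Implicit Defensive.
Import Order.TTheory GRing.Theory Num.Theory.
Local Open Scope ring_scope.

Definition m_sum_free (p m : nat) (A : {set 'Z_p}) : bool :=
  [forall x in A, forall y in A, forall z in A, x + y != z *+ m].

Definition max_msf_card (p m : nat) : nat :=
  \max_(A : {set 'Z_p} | m_sum_free m A) #|A|.

Definition dm (R : numFieldType) (m p : nat) : R :=
  (max_msf_card p m)%:R / p%:R.

(* Main.v *)
Require Import Defs.
From HB Require Import structures.
From mathcomp Require Import all_boot all_order all_algebra all_field.
From mathcomp Require Import zify ring lra.
Set Implicit Arguments. Unset Strict Implicit. Unset Printing Implicit Defensive.
Import Order.TTheory GRing.Theory Num.Theory.
Lemma modn_lt2 x p : 0 < p -> x < 2 * p -> (x < p /\ x %% p = x) \/ (p <= x /\ x %% p = x - p).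
Proof.
move=> p0 hx; case: (ltnP x p) => h.
  by left; rewrite modn_small.
right; split=> //.
have -> : x = 1 * p + (x - p) by lia.
rewrite modnMDl modn_small; lia.
Qed.

Lemma sum_mod_cases p X K a b : 2*X + 2*K < p ->
  (a <= X \/ (p - K <= a /\ a < p)) -> (b <= X \/ (p - K <= b /\ b < p)) ->
  (a+b) %% p <= 2*X \/ p - 2*K <= (a+b) %% p.
Proof.
move=> hp ha hb.
have : a + b < 2 * p by lia.
have p0 : 0 < p by lia.
case/(modn_lt2 p0) => [[h ->]|[h ->]]; lia.
Qed.
Lemma Zp_nat_inj (p a c : nat) : 1 < p -> a < p -> c < p -> ((a%:R)%R : 'Z_p) = ((c%:R)%R) -> a = c.
Proof.
move=> p1 ha hc e.
have : a %% p = c %% p by rewrite -!(val_Zp_nat p1) e.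
by rewrite !modn_small.
Qed.

Lemma construct (m n p : nat) : 7 <= m -> 0 < n -> p = 4 * m ^ 2 * n + 1 ->
  exists A : {set 'Z_p}, m_sum_free m A /\ m ^ 2 * n <= 2 * #|A|.
Proof.
move=> hm hn hp.
have [b [r [hm4 hr]]] : exists b r, m = 4 * b + r /\ r < 4.
  by exists (m %/ 4), (m %% 4); lia.
have hb : 1 <= b by lia.
have hpM : p = 4 * m * (m * n) + 1 by rewrite hp; lia.
have p1 : 1 < p by lia.
have hmm : m * n * m = m * n * (4 * b + r) by rewrite -hm4.
have [khi [hk1 [hk2 hk3]]] : exists khi, khi <= m * n * r /\ khi <= 2 * (m * n) + 2 * n * r /\
   (khi = m * n * r \/ khi = 2 * (m * n) + 2 * n * r).
  by exists (minn (m * n * r) (2 * (m * n) + 2 * n * r)); lia.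
pose good v := 2 * (4 * (m * n) * b) + 1 <= (v * m) %% p /\ (v * m) %% p <= p - 2 * (m * n * r) - 1.
pose fP (st : 'I_b * 'I_(2 * (m * n))) : 'Z_p := ((4 * (m * n) * st.1 + 8 * n * b + 1 + st.2)%:R)%R.
pose fQ (i : 'I_(khi - 2 * n * r)) : 'Z_p := ((p - (2 * n * r + 1 + i))%:R)%R.
have memP x : x \in fP @: setT -> exists v, x = (v%:R)%R /\ v <= 4 * (m * n) * b /\ good v.
  case/imsetP => [[[s hs] [j hj]] _ ->] /=.
  exists (4 * (m * n) * s + 8 * n * b + 1 + j); split => //.
  have h1 : m * n * (s + 1) <= m * n * b by rewrite leq_mul2l; lia.
  have h2 : n * (4 * b) <= n * m by rewrite leq_mul2l; lia.
  have h3 : m * 1 <= m * (8 * n * b + 1 + j) by rewrite leq_mul2l; lia.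
  have h4 : m * (8 * n * b + 1 + j) <= m * (8 * n * b + 2 * (m * n)) by rewrite leq_mul2l; lia.
  have h5 : m * (8 * n * b + 1) <= m * (8 * n * b + 1 + j) by rewrite leq_mul2l; lia.
  have e : (4 * (m * n) * s + 8 * n * b + 1 + j) * m = s * p + (m * (8 * n * b + 1 + j) - s).
    rewrite hpM; lia.
  rewrite /good e modnMDl modn_small; last by rewrite hpM; lia.
  split; first by lia.
  rewrite hpM; lia.
have memQ x : x \in fQ @: setT -> exists v, x = (v%:R)%R /\ p - m * n * r <= v < p /\ good v.
  case/imsetP => [[i hi] _ ->] /=.
  exists (p - (2 * n * r + 1 + i)); split => //.
  set k := 2 * n * r + 1 + i.
  have hk : k <= khi by rewrite /k; lia.
  have h1 : m * k <= m * (2 * (m * n) + 2 * n * r) by rewrite leq_mul2l; lia.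
  have h2 : m * (2 * n * r + 1) <= m * k by rewrite leq_mul2l /k; lia.
  have h3 : m * n * r <= m * n * m by rewrite leq_mul2l; lia.
  have e : (p - k) * m = (m - 1) * p + (p - m * k).
    rewrite !mulnBl mul1n.
    have : p <= m * p by rewrite leq_pmull; lia.
    rewrite hpM; lia.
  rewrite /good e modnMDl modn_small; last by rewrite hpM; lia.
  split; first by rewrite hpM; lia.
  rewrite hpM; lia.
have hXK : 2 * (4 * (m * n) * b) + 2 * (m * n * r) < p by rewrite hpM; lia.
have hX : 4 * (m * n) * b < p by lia.
exists (fP @: setT :|: fQ @: setT); split.
  have memA x : x \in fP @: setT :|: fQ @: setT -> exists v, x = (v%:R)%R /\
      (v <= 4 * (m * n) * b \/ (p - m * n * r <= v /\ v < p)) /\ good v.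
    case/setUP => [/memP [v [-> [h1 h2]]] | /memQ [v [-> [/andP [h1 h1'] h2]]]];
      exists v; split => //; split => //; [left | right]; done.
  apply/forallP => x; apply/implyP => /memA [a [-> [ga _]]].
  apply/forallP => y; apply/implyP => /memA [c [-> [gc _]]].
  apply/forallP => z; apply/implyP => /memA [d [-> [_ gd]]].
  apply/negP => /eqP e.
  have : (a + c) %% p = (d * m) %% p.
    by rewrite -!(val_Zp_nat p1) natrD e natrM mulr_natr.
  case: (sum_mod_cases hXK ga gc); move: gd; rewrite /good; lia.
have injP : injective fP.
  move=> [[s1 h1] [j1 hj1]] [[s2 h2] [j2 hj2]] e; rewrite /fP /fQ /= in e.
  have hs1 : m * n * (s1 + 1) <= m * n * b by rewrite leq_mul2l; lia.
  have hs2 : m * n * (s2 + 1) <= m * n * b by rewrite leq_mul2l; lia.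
  have h2' : n * (4 * b) <= n * m by rewrite leq_mul2l; lia.
  have ev : 4 * (m * n) * s1 + 8 * n * b + 1 + j1 = 4 * (m * n) * s2 + 8 * n * b + 1 + j2.
    by apply: (Zp_nat_inj p1 _ _ e); lia.
  have es : s1 = s2.
    case: (ltngtP s1 s2) => // hlt.
      have : m * n * (s1 + 1) <= m * n * s2 by rewrite leq_mul2l; lia.
      lia.
    have : m * n * (s2 + 1) <= m * n * s1 by rewrite leq_mul2l; lia.
    lia.
  have ej : j1 = j2 by subst; lia.
  by congr (_ , _); apply: val_inj.
have injQ : injective fQ.
  move=> [i1 h1] [i2 h2] e; rewrite /fP /fQ /= in e.
  have ev : p - (2 * n * r + 1 + i1) = p - (2 * n * r + 1 + i2).
    by apply: (Zp_nat_inj p1 _ _ e); lia.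
  apply: val_inj => /=; lia.
have I0 : fP @: setT :&: fQ @: setT = set0.
  apply/setP => x; rewrite !inE; apply/negP => /andP [/memP [v1 [-> [hv1 _]]] /memQ [v2 [e [/andP [hv2 hv2'] _]]]].
  have := Zp_nat_inj p1 _ _ e; lia.
rewrite cardsU I0 cards0 subn0 !card_imset // !cardsT card_prod !card_ord.
have hq : m * n * r <= 2 * (khi - 2 * n * r).
  case: hk3 => ->.
    have : n * r * 4 <= n * r * m by rewrite leq_mul2l; lia.
    lia.
  have : m * n * r <= m * n * 3 by rewrite leq_mul2l; lia.
  lia.
have -> : m ^ 2 * n = m * n * m by rewrite expnS expn1; lia.
lia.
Qed.
Lemma maxcard_ge (m n p : nat) : 7 <= m -> 0 < n -> p = 4 * m ^ 2 * n + 1 ->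
  p - 1 <= 8 * max_msf_card p m.
Proof.
move=> hm hn hp.
have [A [hA hc]] := construct hm hn hp.
have : #|A| <= max_msf_card p m by rewrite /max_msf_card; apply: (leq_bigmax_cond A hA).
lia.
Qed.

Local Open Scope ring_scope.

Lemma dm_facts (R : realFieldType) (m n p : nat) : (7 <= m)%N -> (0 < n)%N -> p = (4 * m ^ 2 * n + 1)%N ->
  (1 / 8) * (1 - 1 / p%:R) <= dm R m p /\
  ((1/8 <= dm R m p) \/ dm R m p = (1 / 8) * (1 - 1 / p%:R)).
Proof.
move=> hm hn hp.
have := maxcard_ge hm hn hp.
rewrite /dm; set M := max_msf_card p m => hM.
have p0 : (0 < p)%N by lia.
have P0 : 0 < p%:R :> R by rewrite ltr0n.
have e1 : (1 / 8) * (1 - 1 / p%:R) = (p%:R - 1) / (8 * p%:R) :> R by field; rewrite pnatr_eq0 -lt0n.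
have e2 : (M%:R / p%:R) = (8 * M%:R) / (8 * p%:R) :> R by field; rewrite pnatr_eq0 -lt0n.
have P8 : 0 < 8 * p%:R :> R by rewrite mulr_gt0.
rewrite e1 e2; split.
  rewrite ler_pM2r ?invr_gt0 //.
  have : (p <= 8 * M + 1)%N by lia.
  rewrite -(ler_nat R) natrD natrM => h; lra.
case: (leqP p (8 * M)) => h.
  left; rewrite ler_pdivlMr //.
  have : p%:R <= (8 * M)%:R :> R by rewrite ler_nat.
  rewrite natrM => h'; lra.
right; have : (8 * M)%:R = (p - 1)%:R :> R by congr (_%:R); lia.
rewrite natrM natrB // => ->; done.
Qed.
Local Open Scope ring_scope.

Definition Pc (F : fieldType) (d : nat) : {poly F} := map_poly (intr : int -> F) 'Phi_d.

Lemma prodPc (F : fieldType) (k : nat) : (0 < k)%N ->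
  \prod_(d <- divisors k) Pc F d = 'X^k - 1.
Proof.
move=> k0; have := congr1 (map_poly (intr : int -> F)) (prod_Cyclotomic k0).
by rewrite rmorph_prod rmorphB /= map_polyXn rmorph1.
Qed.

Lemma Pc_dvd (F : fieldType) (k d : nat) : (0 < k)%N -> (d %| k)%N -> d != k ->
  Pc F k * Pc F d %| 'X^k - 1.
Proof.
move=> k0 dk nk.
rewrite -prodPc // (big_rem k) /=; last by rewrite -dvdn_divisors.
rewrite (big_rem d) /=; last first.
  by rewrite mem_rem_uniq ?divisors_uniq // inE /= nk /= -dvdn_divisors.
by rewrite mulrA dvdp_mulr.
Qed.

Lemma Pc_sep (F : fieldType) (k d : nat) (x : F) : (0 < k)%N -> k%:R != 0 :> F ->
  (d %| k)%N -> d != k -> root (Pc F k) x -> ~~ root (Pc F d) x.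
Proof.
move=> k0 kF dk nk rk.
have cop := separable_coprime (separable_Xn_sub_1 kF) (Pc_dvd F k0 dk nk).
by rewrite /root (coprimep_root cop rk).
Qed.

Lemma root_Pc_Xn (F : fieldType) (k : nat) (x : F) : (0 < k)%N -> root (Pc F k) x -> x ^+ k = 1.
Proof.
move=> k0 /eqP rk.
have : ('X^k - 1 : {poly F}).[x] = 0.
  rewrite -prodPc // horner_prod (big_rem k) /=; last by rewrite -dvdn_divisors.
  by rewrite rk mul0r.
rewrite !hornerE /=; by move=> /eqP; rewrite subr_eq0 => /eqP.
Qed.

Lemma root_Xn_Pc (F : fieldType) (m : nat) (x : F) : (0 < m)%N -> x ^+ m = 1 ->
  exists d, (d %| m)%N /\ root (Pc F d) x.
Proof.
move=> m0 xm.
have : (\prod_(d <- divisors m) (Pc F d).[x]) == 0.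
  by rewrite -horner_prod prodPc // !hornerE /= xm subrr.
rewrite prodf_seq_eq0 => /hasP [d dm /= rd].
by exists d; split; [rewrite dvdn_divisors | ].
Qed.

Lemma prim_of_root (F : fieldType) (k : nat) (x : F) : (0 < k)%N -> k%:R != 0 :> F ->
  root (Pc F k) x -> k.-primitive_root x.
Proof.
move=> k0 kF rk.
have [m0 pm0 m0k] := prim_order_exists k0 (root_Pc_Xn k0 rk).
have m00 := prim_order_gt0 pm0.
have [d [dm rd]] := root_Xn_Pc m00 (prim_expr_order pm0).
have dk : (d %| k)%N := dvdn_trans dm m0k.
case: (eqVneq d k) => [edk | ndk]; last by have := Pc_sep k0 kF dk ndk rk; rewrite rd.
have -> : k = m0 by apply/eqP; rewrite eqn_dvd m0k -edk dm.
exact: pm0.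
Qed.
Lemma Fp_int0 (q : nat) (z : int) : prime q -> (q %| `|z|)%N -> (z%:~R : 'F_q) = 0.
Proof. by move=> pq hz; apply/eqP; rewrite -(dvdz_pcharf (pchar_Fp pq)). Qed.

Lemma Fp_nat0 (q n : nat) : prime q -> ((n%:R : 'F_q) == 0) = (q %| n)%N.
Proof. by move=> pq; rewrite -[n%:R]/((n%:Z)%:~R) -(dvdz_pcharf (pchar_Fp pq)). Qed.

Lemma dirichlet1 (k B : nat) : (0 < k)%N -> exists q, prime q /\ (B < q)%N /\ (k %| q.-1)%N.
Proof.
move=> k0.
set a := (2 * k * B`!)%N.
have a2 : (2 <= a)%N by rewrite /a; have := fact_gt0 B; nia.
set Phi := 'Phi_k.
have sPhi : size Phi = (totient k).+1 by apply: size_Cyclotomic.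
have tk : (0 < totient k)%N by rewrite totient_gt0.
have Phi0 : Phi != 0 by apply: monic_neq0; apply: Cyclotomic_monic.
set g : {poly int} := Phi * Phi - 1.
have g0 : g != 0.
  apply/eqP => e.
  have e1 : Phi * Phi = 1 by apply/eqP; rewrite -subr_eq0 -/g e.
  have := size_mul Phi0 Phi0; rewrite e1 size_poly1 sPhi; lia.
set rs := [seq ((a * i.+1)%N%:Z : int) | i <- iota 0 (size g)].
have : ~~ all (root g) rs.
  apply/negP => allr.
  have urs : uniq rs.
    rewrite map_inj_uniq ?iota_uniq // => i j /eqP; rewrite eqz_nat eqn_pmul2l; last by lia.
    by move/eqP => [].
  have := max_poly_roots g0 allr urs.
  by rewrite size_map size_iota ltnn.
case/allPn => x /mapP [i _ ->] ngx.
set c := (a * i.+1)%N.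
have c2 : (2 <= c)%N by rewrite /c; nia.
set z := Phi.[c%:Z].
have zz : z * z != 1.
  apply: contra ngx => /eqP zz.
  by rewrite /root /g !hornerE -/z zz subrr.
have zn0 : z != 0.
  apply/eqP => z0.
  have : ('X^k - 1 : {poly int}).[c%:Z] = 0.
    rewrite -prod_Cyclotomic // horner_prod (big_rem k) /=; last by rewrite -dvdn_divisors.
    by rewrite -/Phi -/z z0 mul0r.
  rewrite !hornerE => /eqP; rewrite subr_eq0 -!natz -natrX pnatr_eq1 => /eqP ck.
  have := ltn_expl k c2; rewrite ck; lia.
set v := `|z|%N.
have v2 : (1 < v)%N.
  have v0 : v != 0%N by rewrite /v absz_eq0.
  case: (ltngtP v 1) => // hv.
    by move: v0; rewrite /v; lia.
  move: zz; rewrite [z]intEsign -/v hv mulr1.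
  by rewrite -expr2 sqrr_sign eqxx.
set q := pdiv v.
have pq : prime q := pdiv_prime v2.
have qv : (q %| v)%N := pdiv_dvd v.
set al : 'F_q := c%:R.
have rootq : root (Pc 'F_q k) al.
  rewrite /root /Pc -[al]/((c%:Z)%:~R) (horner_map (intr : {rmorphism int -> 'F_q})) /=.
  by rewrite -/Phi -/z Fp_int0.
have al0 : al != 0.
  apply/eqP => al0.
  have := root_Pc_Xn k0 rootq; rewrite al0 expr0n.
  have -> : (k == 0%N) = false by lia.
  by move/eqP; rewrite eq_sym oner_eq0.
have qc : ~~ (q %| c)%N by rewrite -Fp_nat0.
have qk : ~~ (q %| k)%N.
  apply: contra qc => qk; rewrite /c /a.
  apply: (dvdn_trans qk); do 2! apply: dvdn_mulr; exact: dvdn_mull.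
have kF : k%:R != 0 :> 'F_q by rewrite Fp_nat0.
have Bq : (B < q)%N.
  rewrite ltnNge; apply: contra qc => qB.
  rewrite /c /a; apply: dvdn_mulr; apply: dvdn_mull.
  by apply: dvdn_fact; rewrite prime_gt0.
exists q; split => //; split => //.
have prim := prim_of_root k0 kF rootq.
rewrite (prim_order_dvd prim).
have e0 := expf_card al; rewrite card_Fp // in e0.
have e : al ^+ q.-1 * al = al by rewrite -exprSr prednK // prime_gt0.
apply/eqP; apply: (mulIf al0); rewrite mul1r.
by rewrite -[X in _ = X]e.
Qed.
Lemma prog_prime (m B : nat) : (7 <= m)%N -> exists p n, prime p /\ (B < p)%N /\ (0 < n)%N /\ p = (4 * m ^ 2 * n + 1)%N.
Proof.
move=> hm.
have k0 : (0 < 4 * m ^ 2)%N by rewrite muln_gt0 expn_gt0; lia.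
have [q [pq [Bq hk]]] := dirichlet1 B k0.
exists q, (q.-1 %/ (4 * m ^ 2))%N; split => //; split => //.
have q1 : (1 < q)%N by apply: prime_gt1.
have e := divnK hk.
split.
  rewrite divn_gt0 //; apply: dvdn_leq => //; lia.
rewrite mulnC e; lia.
Qed.

Lemma part2 (m : nat) (hm : (7 <= m)%N) (R : realFieldType) (L : R) :
  (forall eps : R, 0 < eps -> exists N : nat,
     forall p : nat, prime p -> (N <= p)%N -> `|dm R m p - L| < eps) ->
  1 / 8 <= L.
Proof.
move=> H.
rewrite leNgt; apply/negP => hL.
have [d [d0 ed]] : exists d, 0 < d /\ L = 1 / 8 - d by exists (1/8 - L); split; [lra | ring].
have [N1 H1] := H (d / 2) ltac:(lra).
have [N2 H2] := H (d * d / 4) ltac:(by apply: divr_gt0 => //; apply: mulr_gt0).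
have [p1 [n1 [pp1 [Bp1 [n10 ep1]]]]] := prog_prime (maxn N1 N2) hm.
have [p2 [n2 [pp2 [Bp2 [n20 ep2]]]]] := prog_prime p1 hm.
have [lo1 c1] := dm_facts R hm n10 ep1.
have [lo2 c2] := dm_facts R hm n20 ep2.
have hN1 : (N1 <= p1)%N := leq_trans (leq_maxl N1 N2) (ltnW Bp1).
have hN2 : (N2 <= p1)%N := leq_trans (leq_maxr N1 N2) (ltnW Bp1).
have a11 := H1 p1 pp1 hN1.
have a12 := H2 p1 pp1 hN2.
have a21 := H1 p2 pp2 (leq_trans hN1 (ltnW Bp2)).
have a22 := H2 p2 pp2 (leq_trans hN2 (ltnW Bp2)).
move: a11 a12 a21 a22; rewrite !ltr_norml => /andP[a11 a11'] /andP[a12 a12'] /andP[a21 a21'] /andP[a22 a22'].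
have f1 : dm R m p1 = 1 / 8 * (1 - 1 / p1%:R).
  case: c1 => // h; rewrite ed in a11'; lra.
have f2 : dm R m p2 = 1 / 8 * (1 - 1 / p2%:R).
  case: c2 => // h; rewrite ed in a21'; lra.
have P1ge : 1 <= p1%:R :> R by rewrite ler1n prime_gt0.
have P21 : p1%:R + 1 <= p2%:R :> R by rewrite natr1 ler_nat.
move: (p1%:R : R) (p2%:R : R) P1ge P21 f1 f2 => P1 P2 P1ge P21 f1 f2.
have ea : 1 / 8 * (1 - 1 / P1) = 1/8 - 1 / (8 * P1) by field; lra.
have eb : 1 / 8 * (1 - 1 / P2) = 1/8 - 1 / (8 * P2) by field; lra.
have hab : 2 * (1 / (8 * P1)) * (1 / (8 * P1)) <= 1 / (8 * P1) - 1 / (8 * P2).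
  rewrite -subr_ge0.
  have -> : 1 / (8 * P1) - 1 / (8 * P2) - 2 * (1 / (8 * P1)) * (1 / (8 * P1)) =
     (4 * P1 * (P2 - P1) - P2) / (32 * P1 * P1 * P2) by field; lra.
  apply: divr_ge0; last by apply: mulr_ge0; [apply: mulr_ge0|]; lra.
  nra.
move: hab; rewrite f1 ea in a11' a12 a12'; rewrite f2 eb in a21' a22 a22'.
move: (1 / (8 * P1)) (1 / (8 * P2)) a11' a12 a12' a21' a22 a22' => a b a11' a12 a12' a21' a22 a22' hab.
rewrite ed in a11' a12 a12' a21' a22 a22'.
have h1 : d < 2 * a by lra.
have h2 : a - b < d * d / 2 by lra.
have h3 : 0 < a by lra.
nra.
Qed.

Theorem lemma3p1 (m : nat) (hm : (7 <= m)%N) :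
  (forall n p : nat, (0 < n)%N -> p = (4 * m ^ 2 * n + 1)%N -> prime p ->
     (1 / 8) * (1 - 1 / p%:R) <= dm rat m p)
  /\
  (forall (R : realFieldType) (L : R),
     (forall eps : R, 0 < eps -> exists N : nat,
        forall p : nat, prime p -> (N <= p)%N -> `|dm R m p - L| < eps) ->
     1 / 8 <= L).
Proof.
split.
  move=> n p hn hp _.
  by have [] := dm_facts rat hm hn hp.
move=> R L H; exact: (@part2 m hm R L H).
Qed.
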